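(* Let $S>0$, let $I\ge 1$, let $N_1,\dots,N_I$ be positive integers and let $\theta_1>\theta_2>\dots>\theta_I>0$. Consider the complete price differentiation problem $$\max_{\{p_i>0,\ s_i\ge 0,\ n_i\}_{i=1}^I}\ \sum_{i=1}^I n_i p_i s_i\quad\text{s.t.}\quad s_i=\Big(\frac{\theta_i}{p_i}-1\Big)^+,\ \ n_i\in\{0,1,\dots,N_i\}\ (i=1,\dots,I),\quad \sum_{i=1}^I n_i s_i\le S,$$ where $(x)^+=\max(x,0)$. For $k\in\{1,\dots,I\}$ let $\lambda(k)=\Big(\frac{\sum_{i=1}^k N_i\sqrt{\theta_i}}{S+\sum_{i=1}^k N_i}\Big)^2$, let $K^{cp}=\max\{k\in\{1,\dots,I\}:\theta_k>\lambda(k)\}$ (this set contains $k=1$), and let $\lambda^*=\lambda(K^{cp})$. Then this problem has an optimal solution in which $n_i=N_i$ for all $i$, $$s_i=\sqrt{\theta_i/\lambda^*}-1,\ \ p_i=\sqrt{\theta_i\lambda^*}\quad\text{for } i=1,\dots,K^{cp},$$ and $s_i=0$, $p_i=\theta_i$ for $i=K^{cp}+1,\dots,I$.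
   Context: Each user of group $i$ has utility $\theta_i\ln(1+s)$ for $s$ units of resource; a user facing unit price $p_i$ demands the surplus-maximizing quantity $(\theta_i/p_i-1)^+$. The service provider with total resource $S$ chooses a price $p_i$ and a number $n_i$ of admitted users for each group $i$ to maximize revenue. *)

(* Defs.v *)
From mathcomp Require Import all_boot all_order all_algebra.
Set Implicit Arguments. Unset Strict Implicit. Unset Printing Implicit Defensive.
Import Order.TTheory GRing.Theory Num.Theory.
Local Open Scope ring_scope.

Section CPD.
Variable R : rcfType.

Definition posp (x : R) : R := Num.max x 0.

Definition demand (theta p : R) : R := posp (theta / p - 1).

Definition cp_feasible (I : nat) (S : R) (N : nat -> nat) (theta : nat -> R)
  (p s : nat -> R) (n : nat -> nat) : Prop :=
  (forall i, (1 <= i <= I)%N ->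
     [/\ 0 < p i, 0 <= s i, s i = demand (theta i) (p i) & (n i <= N i)%N])
  /\ \sum_(1 <= i < I.+1) (n i)%:R * s i <= S.

Definition cp_revenue (I : nat) (p s : nat -> R) (n : nat -> nat) : R :=
  \sum_(1 <= i < I.+1) (n i)%:R * p i * s i.

Definition cp_optimal (I : nat) (S : R) (N : nat -> nat) (theta : nat -> R)
  (p s : nat -> R) (n : nat -> nat) : Prop :=
  cp_feasible I S N theta p s n /\
  forall p' s' n', cp_feasible I S N theta p' s' n' ->
    cp_revenue I p' s' n' <= cp_revenue I p s n.

Definition cp_lambda (S : R) (N : nat -> nat) (theta : nat -> R) (k : nat) : R :=
  ((\sum_(1 <= i < k.+1) (N i)%:R * Num.sqrt (theta i))
    / (S + \sum_(1 <= i < k.+1) (N i)%:R)) ^+ 2.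

Definition Kcp (I : nat) (S : R) (N : nat -> nat) (theta : nat -> R) : nat :=
  \max_(1 <= k < I.+1 | cp_lambda S N theta k < theta k) k.

End CPD.

(* Main.v *)
Require Import Defs.
From mathcomp Require Import all_boot all_order all_algebra.
From mathcomp Require Import ring lra.
Import Order.TTheory GRing.Theory Num.Theory.
Local Open Scope ring_scope.

Lemma bigmax_props (P : pred nat) (n : nat) : (1 <= n)%N -> P 1%N ->
  let M := (\max_(1 <= k < n.+1 | P k) k)%N in
  [/\ (1 <= M <= n)%N, P M & forall k, (M < k <= n)%N -> ~~ P k].
Proof.
move=> + P1; elim: n => [//|n IH] _ /=.
rewrite big_mkcond big_nat_recr //= -big_mkcond.
have [Mle PM Mgt] : [/\ (\max_(1 <= k < n.+1 | P k) k <= n)%N,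
   (0 < n)%N -> P (\max_(1 <= k < n.+1 | P k) k) &
   forall k, (\max_(1 <= k < n.+1 | P k) k < k <= n)%N -> ~~ P k].
  case: n IH => [|n] IH.
    by rewrite big_geq //; split => // k; case: k => [|[]].
  have [/andP[_ h1] h2 h3] := IH erefl; split => //.
case: ifP => Pn.
  rewrite (maxn_idPr (leqW Mle)); split => //.
    by rewrite leqnn andbT.
  by move=> k /andP[a b]; move: (leq_ltn_trans b a); rewrite ltnn.
rewrite maxn0; case: n IH Mle PM Mgt Pn => [|n] IH Mle PM Mgt Pn.
  by rewrite Pn in P1.
have [/andP[h0 h1] h2 h3] := IH erefl; split => //.
  by rewrite h0 /= (leq_trans h1).
move=> k /andP[a b]; rewrite leq_eqVlt in b; case/orP: b => [/eqP->|b].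
  by rewrite Pn.
by apply: h3; rewrite a -ltnS.
Qed.

Lemma cE_id (R : rcfType) (a m : R) : m != 0 -> a * m * (a / m - 1) - m ^+ 2 * (a / m - 1) = (a - m) ^+ 2.
Proof. move=> h; field; exact: h. Qed.
Lemma D_id (R : rcfType) (a m q t : R) : m != 0 -> q != 0 -> t = a ^+ 2 ->
  q * (a * m * (a / m - 1) - m ^+ 2 * (a / m - 1) + m ^+ 2 * (t / q - 1) - q * (t / q - 1)) = (q - a * m) ^+ 2.
Proof. move=> h1 h2 ->; field; by rewrite h1 h2. Qed.
Lemma qx_id (R : rcfType) (q t : R) : q != 0 -> q * (t / q - 1) = t - q.
Proof. move=> h; field; exact: h. Qed.
Lemma div_id (R : rcfType) (a m : R) : a != 0 -> m != 0 -> a ^+ 2 / (a * m) = a / m.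
Proof. move=> h1 h2; field; by rewrite h1 h2. Qed.


Theorem theorem1 (R : rcfType) (S : R) (I : nat) (N : nat -> nat)
  (theta : nat -> R) :
  0 < S -> (1 <= I)%N ->
  (forall i, (1 <= i <= I)%N -> (0 < N i)%N) ->
  (forall i, (1 <= i)%N -> (i < I)%N -> theta i.+1 < theta i) ->
  0 < theta I ->
  let K := Kcp I S N theta in
  let lam := cp_lambda S N theta K in
  exists (p s : nat -> R) (n : nat -> nat),
    cp_optimal I S N theta p s n /\
    forall i, (1 <= i <= I)%N ->
      [/\ n i = N i,
          (i <= K)%N -> s i = Num.sqrt (theta i / lam) - 1 /\
                        p i = Num.sqrt (theta i * lam)
        & (K < i)%N -> s i = 0 /\ p i = theta i].
Proof.
move=> S0 I1 Npos thdec thI K lam.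
have thmono : forall d i, (1 <= i)%N -> (i + d <= I)%N -> theta (i + d)%N <= theta i.
  elim=> [|d IH] i i1 hid; first by rewrite addn0.
  have h1 : (i + d <= I)%N by apply: leq_trans hid; rewrite leq_add2l.
  apply: le_trans (IH i i1 h1); rewrite addnS; apply/ltW/thdec => //.
    by rewrite (leq_trans i1) ?leq_addr.
  by rewrite -addnS.
have thle : forall i j, (1 <= i)%N -> (i <= j <= I)%N -> theta j <= theta i.
  move=> i j i1 /andP[ij jI]; rewrite -(subnKC ij); apply: thmono => //.
  by rewrite subnKC.
have thpos : forall i, (1 <= i <= I)%N -> 0 < theta i.
  move=> i /andP[i1 iI]; apply: lt_le_trans thI _; apply: thle => //.
  by rewrite iI leqnn.
have Nr : forall i, (1 <= i <= I)%N -> 0 < (N i)%:R :> R.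
  by move=> i hi; rewrite ltr0n Npos.
have P1 : cp_lambda S N theta 1 < theta 1.
  rewrite /cp_lambda big_nat1 big_nat1.
  have t1 := thpos 1%N I1 ; have n1 := Nr 1%N I1.
  set a := Num.sqrt (theta 1); have a0 : 0 < a by rewrite sqrtr_gt0.
  have -> : theta 1 = a ^+ 2 by rewrite sqr_sqrtr // ltW.
  set n := (N 1)%:R; set q := n * a / (S + n).
  have hq : q * (S + n) = n * a by rewrite /q mulfVK // gt_eqF // addr_gt0.
  have q0 : 0 <= q by rewrite /q divr_ge0 // ?mulr_ge0 ?ltW // addr_gt0.
  have : q < a by nra.
  nra.
have [/andP[K1 KI] PK Pnext] := bigmax_props (fun k => cp_lambda S N theta k < theta k) I I1 P1.
rewrite -/K in K1 KI PK Pnext.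
pose A := \sum_(1 <= i < K.+1) (N i)%:R * Num.sqrt (theta i).
pose B := S + \sum_(1 <= i < K.+1) ((N i)%:R : R).
have KI' : forall i, (1 <= i <= K)%N -> (1 <= i <= I)%N.
  by move=> i /andP[-> h]; rewrite (leq_trans h).
have A0 : 0 < A.
  rewrite /A big_ltn // ltr_pwDl //.
    by rewrite mulr_gt0 ?Nr ?sqrtr_gt0 ?thpos.
  by rewrite sumr_ge0 // => i _; rewrite mulr_ge0 ?sqrtr_ge0.
have B0 : 0 < B by rewrite /B ltr_pwDl ?sumr_ge0.
pose m := A / B.
have m0 : 0 < m by rewrite divr_gt0.
have lamE : lam = m ^+ 2 by [].
have sqlam : Num.sqrt lam = m by rewrite lamE sqrtr_sqr gtr0_norm.
have hmB : m * B = A by rewrite /m mulfVK // gt_eqF.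
clearbody m.
have lowK : forall i, (1 <= i <= K)%N -> m < Num.sqrt (theta i).
  move=> i hi; have hK : lam < theta i.
    apply: lt_le_trans PK _; apply: thle; first by case/andP: hi.
    by case/andP: hi => _ ->.
  have a0 := sqrtr_ge0 (theta i).
  have ta : theta i = Num.sqrt (theta i) ^+ 2 by rewrite sqr_sqrtr // ltW // thpos ?KI'.
  rewrite ta lamE in hK; nra.
have highK : forall i, (K < i <= I)%N -> theta i <= lam.
  move=> i /andP[Ki iI].
  have KI2 : (1 <= K.+1 <= I)%N by rewrite (leq_trans Ki iI).
  apply: le_trans (thle K.+1 i _ _) _ => //; first by rewrite Ki iI.
  have := Pnext K.+1; rewrite leqnn (leq_trans Ki iI) => /(_ erefl).
  rewrite -leNgt /cp_lambda big_nat_recr // [X in S + X]big_nat_recr //= addrA -/A -/B.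
  set x := Num.sqrt (theta K.+1); set n := (N K.+1)%:R.
  have n0 : 0 < n by rewrite /n Nr.
  have x0 : 0 <= x by rewrite sqrtr_ge0.
  have tx : theta K.+1 = x ^+ 2 by rewrite sqr_sqrtr // ltW // thpos.
  set q := (A + n * x) / (B + n).
  have hq : q * (B + n) = A + n * x by rewrite /q mulfVK // gt_eqF // addr_gt0.
  have Bn : 0 < B + n by rewrite addr_gt0.
  have q0 : 0 <= q.
    rewrite /q divr_ge0 ?(ltW Bn) //; apply: addr_ge0; [exact: ltW | exact: mulr_ge0 (ltW n0) x0].
  have hm := hmB.
  rewrite tx lamE => hx.
  have : x <= q by nra.
  move=> xq; have : x * B <= A by nra.
  move=> xB; have : x <= m by nra.
  move=> xm; nra.
have KI'' : forall i, (1 <= i <= I)%N -> (i <= K)%N -> (1 <= i <= K)%N.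
  by move=> i /andP[-> _].
have sqM : forall i, (1 <= i <= I)%N -> Num.sqrt (theta i * lam) = Num.sqrt (theta i) * m.
  by move=> i hi; rewrite sqrtrM ?sqlam // ltW // thpos.
have sqV : forall i, (1 <= i <= I)%N -> Num.sqrt (theta i / lam) = Num.sqrt (theta i) / m.
  move=> i hi; rewrite sqrtrM ?ltW ?thpos //; congr (_ * _).
  by rewrite lamE -exprVn sqrtr_sqr gtr0_norm // invr_gt0.
pose p := fun i => if (i <= K)%N then Num.sqrt (theta i * lam) else theta i.
pose s := fun i => if (i <= K)%N then Num.sqrt (theta i / lam) - 1 else 0.
pose c := fun i => p i * s i - lam * s i.
have cE : forall i, (1 <= i <= I)%N -> (i <= K)%N ->
   c i = (Num.sqrt (theta i) - m) ^+ 2.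
  move=> i hi hK; rewrite /c /p /s hK sqM // sqV // lamE.
  by apply: cE_id; rewrite gt_eqF.
have c0 : forall i, (1 <= i <= I)%N -> 0 <= c i.
  move=> i hi; case: (leqP i K) => hK; first by rewrite cE // sqr_ge0.
  by rewrite /c /p /s leqNgt hK /= !mulr0 subr0.
have key : forall i, (1 <= i <= I)%N -> forall q, 0 < q ->
    q * demand (theta i) q <= c i + lam * demand (theta i) q.
  move=> i hi q q0; rewrite /demand /posp maxEle; case: ifP => hx.
    by rewrite !mulr0 addr0 c0.
  move/negbT: hx; rewrite -ltNge => hx.
  have ta : theta i = Num.sqrt (theta i) ^+ 2 by rewrite sqr_sqrtr // ltW // thpos.
  case: (leqP i K) => hK.
    have D : q * (c i + lam * (theta i / q - 1) - q * (theta i / q - 1))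
         = (q - Num.sqrt (theta i) * m) ^+ 2.
      rewrite /c /p /s hK sqM // sqV // lamE.
      by apply: D_id => //; rewrite gt_eqF.
    rewrite -subr_ge0 -(pmulr_rge0 _ q0) D; exact: sqr_ge0.
  have cz : c i = 0 by rewrite /c /p /s leqNgt hK /= !mulr0 subr0.
  rewrite cz add0r.
  have hqx : q * (theta i / q - 1) = theta i - q by apply: qx_id; rewrite gt_eqF.
  have := highK i; rewrite hK; case/andP: hi => _ -> /(_ erefl) => tl.
  have qt : q < theta i by rewrite -subr_gt0 -hqx mulr_gt0.
  by apply: ler_wpM2r; [exact: ltW | exact: le_trans (ltW qt) tl].
have sumS : \sum_(1 <= i < I.+1) (N i)%:R * s i = S.
  rewrite (@big_cat_nat _ _ _ K.+1) //=.
  rewrite [X in _ + X](_ : _ = 0) ?addr0; last first.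
    rewrite big_nat_cond big1 //.
    by move=> i /andP[/andP[Ki _] _]; rewrite /s leqNgt Ki /= mulr0.
  rewrite (eq_big_nat _ _ (F2 := fun i => (N i)%:R * (Num.sqrt (theta i) / m) - (N i)%:R)); last first.
    move=> i /andP[i1 iK]; rewrite ltnS in iK.
    by rewrite /s iK sqV ?KI' ?i1 // mulrBr mulr1.
  rewrite sumrB.
  have -> : \sum_(1 <= i < K.+1) (N i)%:R * (Num.sqrt (theta i) / m) = A / m.
    by rewrite /A mulr_suml; apply: eq_bigr => i _; rewrite mulrA.
  by rewrite -hmB mulrC mulKf ?gt_eqF // /B addrK.
have feas_i : forall i, (1 <= i <= I)%N ->
    [/\ 0 < p i, 0 <= s i, s i = demand (theta i) (p i) & (N i <= N i)%N].
  move=> i hi; have ti := thpos i hi.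
  case: (leqP i K) => hK.
    have hm := lowK i (KI'' i hi hK).
    have a0 : 0 < Num.sqrt (theta i) by rewrite sqrtr_gt0.
    have ta : theta i = Num.sqrt (theta i) ^+ 2 by rewrite sqr_sqrtr // ltW.
    have u1 : 1 < Num.sqrt (theta i) / m by rewrite ltr_pdivlMr // mul1r.
    rewrite /p /s hK sqM // sqV //; split => //.
    - by rewrite mulr_gt0.
    - by rewrite subr_ge0 ltW.
    rewrite /demand /posp; set a := Num.sqrt (theta i); rewrite {1}ta div_id ?gt_eqF // maxEle.
    by rewrite lerBlDr add0r leNgt u1.
  rewrite /p /s leqNgt hK /=; split => //.
    by rewrite /demand /posp divff ?gt_eqF // subrr maxEle lexx.
exists p, s, N; split; last first.
  move=> i hi; split => //.
    by move=> hK; rewrite /s /p hK.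
  by move=> hK; rewrite /s /p leqNgt hK.
split.
  by split => //; rewrite sumS.
move=> p' s' n' [hf hsum]; rewrite /cp_revenue.
apply: (@le_trans _ _ (\sum_(1 <= i < I.+1) ((n' i)%:R * c i + lam * ((n' i)%:R * s' i)))).
  apply: ler_sum_nat => i hi; have [pp _ se _] := hf i hi.
  rewrite -mulrA se [lam * _]mulrCA -mulrDr ler_wpM2l //.
  exact: key i hi _ pp.
rewrite big_split /= -mulr_sumr.
have -> : \sum_(1 <= i < I.+1) (N i)%:R * p i * s i =
    \sum_(1 <= i < I.+1) (N i)%:R * c i + lam * S.
  rewrite -sumS mulr_sumr -big_split /=; apply: eq_bigr => i _.
  by rewrite /c; ring.
apply: lerD.
  apply: ler_sum_nat => i hi; have [_ _ _ nn] := hf i hi.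
  by apply: ler_wpM2r; [exact: c0 | rewrite ler_nat].
by apply: ler_wpM2l => //; rewrite lamE sqr_ge0.
Qed.
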